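(* Let $F$ be a field of characteristic $p>0$ and let $\phi,\psi$ be $p$-forms over $F$ with $\dim\phi=\dim\psi$. Let $L/F$ be a separable algebraic field extension. Then $\phi$ and $\psi$ are similar over $F$ if and only if $\phi_L$ and $\psi_L$ are similar over $L$.
   Context: A $p$-form on a finite-dimensional $F$-vector space $V$ is a map $\phi:V\to F$ with $\phi(x+y)=\phi(x)+\phi(y)$ and $\phi(\lambda x)=\lambda^p\phi(x)$ for all $x,y\in V$ and $\lambda\in F$. Equivalently, in a suitable basis, $\phi=a_1x_1^p+\dots+a_nx_n^p$ with $a_i\in F$. Two $p$-forms $\phi$ on $V$ and $\psi$ on $W$ are isometric if there is a linear bijection $T:V\to W$ with $\psi\circ T=\phi$. They are similar if $\phi\cong c\psi$ for some $c\in F^*$. The subscript $L$ denotes scalar extension to $L$. *)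

(* Defs.v *)
From HB Require Import structures.
From mathcomp Require Import all_boot all_order all_algebra.
From mathcomp Require Import separable.
Set Implicit Arguments. Unset Strict Implicit. Unset Printing Implicit Defensive.
Import GRing.Theory.
Local Open Scope ring_scope.

(* A p-form on the n-dimensional space F^n (row vectors), written in the
   standard basis: phi(x) = \sum_i a_i x_i^p, with coefficients a : 'I_n -> F.
   (Every p-form on F^n has this shape, with a_i = phi(e_i).) *)
Definition pform_eval (F : fieldType) (p n : nat) (a : 'I_n -> F)
  (x : 'rV[F]_n) : F := \sum_(i < n) a i * (x 0 i) ^+ p.

Definition pform_isometric (F : fieldType) (p n : nat) (a b : 'I_n -> F) : Prop :=
  exists T : 'M[F]_n, T \in unitmx /\
    forall x : 'rV[F]_n, pform_eval p b (x *m T) = pform_eval p a x.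

Definition pform_similar (F : fieldType) (p n : nat) (a b : 'I_n -> F) : Prop :=
  exists c : F, c != 0 /\ pform_isometric p a (fun i => c * b i).

Definition pform_ext (F L : fieldType) (iota : {rmorphism F -> L}) (n : nat)
  (a : 'I_n -> F) : 'I_n -> L := fun i => iota (a i).

Definition separable_algebraic_ext (F L : fieldType) (iota : {rmorphism F -> L}) : Prop :=
  forall x : L, exists q : {poly F},
    [/\ q != 0, separable_poly q & root (map_poly iota q) x].

(* Main.v *)
Require Import Defs.
From HB Require Import structures.
From mathcomp Require Import all_boot all_order all_algebra.
From mathcomp Require Import separable fieldext.
From Stdlib Require Import Classical IndefiniteDescription.
From mathcomp Require Import ring zify.
Set Implicit Arguments. Unset Strict Implicit. Unset Printing Implicit Defensive.
Import GRing.Theory.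
Local Open Scope ring_scope.

Section Core.
Variables (M L : fieldType) (j : {rmorphism M -> L}) (x : L) (p : nat).
Hypothesis pM : p \in [pchar M].

Definition van (Q : {poly M}) := root (map_poly j Q) x.

Lemma minpoly_ex (q : {poly M}) : q != 0 -> van q ->
  exists P, [/\ P != 0, van P & forall Q, Q != 0 -> van Q -> (size P <= size Q)%N].
Proof.
move=> q0 vq.
suff H: forall n (Q : {poly M}), (size Q <= n)%N -> Q != 0 -> van Q ->
  exists P, [/\ P != 0, van P & forall Q, Q != 0 -> van Q -> (size P <= size Q)%N].
  exact: (H _ q (leqnn _)).
elim=> [|n IH] Q sQ Q0 vQ.
  by move: Q0; rewrite -size_poly_eq0; move: sQ; rewrite leqn0 => ->.
case: (classic (exists Q', [/\ Q' != 0, van Q' & (size Q' < size Q)%N])).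
  move=> [Q' [Q'0 vQ' sQ']]; apply: (IH Q') => //.
  by rewrite -ltnS; apply: leq_trans sQ'  sQ.
move=> nex; exists Q; split=> // Q' Q'0 vQ'.
rewrite leqNgt; apply/negP => lt; apply: nex; exists Q'; split => //.
Qed.

Lemma van_mod (P G : {poly M}) : van P -> van (G %% P) = van G.
Proof.
move=> vP; rewrite /van {2}(divp_eq G P) rmorphD rmorphM /= !rootE hornerD hornerM.
by move: vP; rewrite /van rootE => /eqP->; rewrite mulr0 add0r.
Qed.

Lemma minpoly_dvd (P G : {poly M}) : P != 0 -> van P ->
  (forall Q, Q != 0 -> van Q -> (size P <= size Q)%N) -> van G -> P %| G.
Proof.
move=> P0 vP Pmin vG; apply/modp_eq0P; apply: contraTeq (ltn_modpN0 G P0).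
move=> nz; rewrite -leqNgt; apply: Pmin => //; by rewrite van_mod.
Qed.

Lemma Core (P H : {poly M}) : P != 0 -> van P ->
  (forall Q, Q != 0 -> van Q -> (size P <= size Q)%N) -> separable_poly P ->
  H != 0 -> (size H < size P)%N -> root (map_poly j H) (x ^+ p) -> False.
Proof.
move=> P0 vP Pmin sepP H0 sH rH.
have pp := pcharf_prime pM.
set G := H \Po 'X^p.
have vG : van G by rewrite /van /G map_comp_poly /= rootE horner_comp map_polyXn hornerXn.
have dG : G^`() = 0.
  by rewrite /G deriv_comp derivXn -mulr_natl -polyC_natr (pcharf0 pM) !(mul0r,mulr0).
have key : forall e, (e <= p)%N -> P ^+ e %| G.
  elim=> [|e IH] lee; first by rewrite expr0 dvd1p.
  have {}IH := IH (ltnW lee).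
  case: e IH lee => [|e] IH lee; first by rewrite expr1; apply: minpoly_dvd.
  have [U defG] := dvdpP _ _ IH.
  have : U^`() * P + (e.+1)%:R *: (U * P^`()) = 0.
    apply: (mulfI (expf_neq0 e P0)).
    rewrite mulr0 -dG defG derivM deriv_exp /= scaler_nat.
    rewrite !exprS; ring.
  move/eqP; rewrite addr_eq0 => /eqP dd.
  have : P %| (e.+1)%:R *: (U * P^`()).
    by rewrite -[_ *: _]opprK -dd dvdpNr dvdp_mull.
  rewrite dvdpZr; last first.
    by rewrite -(dvdn_pcharf pM) ; apply/negP => /dvdn_leq => /(_ isT); rewrite leqNgt lee.
  have sepP' : coprimep P P^`() by move: sepP; rewrite unlock.
  rewrite (Gauss_dvdpl _ sepP') => PU.
  by rewrite defG exprS; apply: dvdp_mul.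
have sG := size_comp_poly H ('X^p); rewrite size_polyXn /= in sG.
have G0 : G != 0.
  have [/size1_polyC eH | gt1] := leqP (size H) 1.
    rewrite /G eH comp_polyC polyC_eq0; by move: H0; rewrite {1}eH polyC_eq0.
  rewrite -size_poly_eq0; apply/eqP => sG0; move: sG; rewrite /G sG0 /=.
  move=> /esym/eqP; rewrite muln_eq0 => /orP[|/eqP p0].
    by rewrite -subn1 subn_eq0 leqNgt gt1.
  by move: (prime_gt0 pp); rewrite p0.
have := dvdp_leq G0 (key p (leqnn _)).
rewrite (polySpred (expf_neq0 p P0)) (polySpred G0) ltnS size_exp sG.
rewrite leq_pmul2r ?prime_gt0 //.
have : (0 < size H)%N by rewrite size_poly_gt0.
move: sH; clear.
move: (size H) (size P) => a b; lia.
Qed.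
End Core.

Lemma eval_mod (M L : fieldType) (j : {rmorphism M -> L}) (x : L) (P C : {poly M}) :
  root (map_poly j P) x -> (map_poly j C).[x] = (map_poly j (C %% P)).[x].
Proof.
move=> /eqP vP; rewrite {1}(divp_eq C P) rmorphD rmorphM /= hornerD hornerM.
by rewrite /root vP mulr0 add0r.
Qed.

Lemma frob_horner (M L : fieldType) (j : {rmorphism M -> L}) (x : L) (p : nat)
  (pM : p \in [pchar M]) (C : {poly M}) :
  ((map_poly j C).[x]) ^+ p = (map_poly j (map_poly (pFrobenius_aut pM) C)).[x ^+ p].
Proof.
have pL := rmorph_pchar j pM.
rewrite -!pFrobenius_autE -(horner_map (pFrobenius_aut pL)) -!map_poly_comp.
congr (_.[_]); apply: eq_map_poly => m /=.
by rewrite !pFrobenius_autE rmorphXn.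
Qed.

Lemma OS (M L : fieldType) (j : {rmorphism M -> L}) (x : L) (p : nat)
  (pM : p \in [pchar M]) (q : {poly M}) :
  q != 0 -> separable_poly q -> root (map_poly j q) x ->
  forall r (c : 'I_r -> {poly M}) (g : 'I_r -> M),
  \sum_l ((map_poly j (c l)).[x]) ^+ p * j (g l) = 0 ->
  (exists l, (map_poly j (c l)).[x] != 0) ->
  exists k : 'I_r -> M, (exists l, k l != 0) /\ \sum_l k l ^+ p * g l = 0.
Proof.
move=> q0 sq vq r c g hs [l0 hl0].
have [P [P0 vP Pmin]] := minpoly_ex q0 vq.
have sP : separable_poly P by apply: (dvdp_separable _ sq); exact: (minpoly_dvd P0 vP Pmin vq).
pose c' l := c l %% P.
have ec l : (map_poly j (c l)).[x] = (map_poly j (c' l)).[x] by apply: eval_mod.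
have sc' l : (size (c' l) < size P)%N by rewrite ltn_modpN0.
pose fM := pFrobenius_aut pM.
pose H := \sum_l map_poly fM (c' l) * (g l)%:P.
have cH k : H`_k = \sum_l ((c' l)`_k) ^+ p * g l.
  rewrite /H coef_sum; apply: eq_bigr => l _.
  by rewrite coefMC coef_map.
have rH : root (map_poly j H) (x ^+ p).
  rewrite /root /H rmorph_sum horner_sum /=; apply/eqP; rewrite -[RHS]hs.
  apply: eq_bigr => l _; rewrite ec frob_horner rmorphM /= hornerM.
  by rewrite map_polyC hornerC.
have H0 : H = 0.
  case: (eqVneq H 0) => // Hn; exfalso.
  apply: (Core pM P0 vP Pmin sP Hn _ rH).
  have: (size H <= (size P).-1)%N.
    apply/leq_sizeP => k kge; rewrite cH big1 // => l _.
    rewrite nth_default; last first.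
      by apply: leq_trans kge; rewrite -ltnS (ltn_predK (sc' l)).
    by rewrite expr0n (gtn_eqF (prime_gt0 (pcharf_prime pM))) mul0r.
  by move=> h; apply: leq_ltn_trans h _; rewrite prednK // size_poly_gt0.
have c0 : c' l0 != 0 by apply: contraNneq hl0; rewrite ec => ->; rewrite rmorph0 horner0.
exists (fun l => (c' l)`_(size (c' l0)).-1); split.
  by exists l0; rewrite -lead_coefE lead_coef_eq0.
by rewrite -cH H0 coef0.
Qed.

Section Tower.
Variable L : fieldType.

Inductive inR (M : fieldType) (j : M -> L) (xs : seq L) : L -> Prop :=
| inR_base m : inR j xs (j m)
| inR_gen y : y \in xs -> inR j xs y
| inR_add y z : inR j xs y -> inR j xs z -> inR j xs (y + z)
| inR_mul y z : inR j xs y -> inR j xs z -> inR j xs (y * z).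

Definition sepalg (M : fieldType) (j : {rmorphism M -> L}) : Prop :=
  forall x : L, exists q : {poly M},
    [/\ q != 0, separable_poly q & root (map_poly j q) x].

Lemma inR_nil (M : fieldType) (j : {rmorphism M -> L}) y :
  inR j [::] y -> exists m, y = j m.
Proof.
elim=> [m|z|z w _ [a ->] _ [b ->]|z w _ [a ->] _ [b ->]]; first by exists m.
- by [].
- by exists (a + b); rewrite rmorphD.
- by exists (a * b); rewrite rmorphM.
Qed.

Lemma LDgen (xs : seq L) : forall (M : fieldType) (j : {rmorphism M -> L}) (p : nat),
  p \in [pchar M] -> sepalg j ->
  forall r (g : 'I_r -> M) (nu : 'I_r -> L), (forall l, inR j xs (nu l)) ->
  \sum_l nu l ^+ p * j (g l) = 0 -> (exists l, nu l != 0) ->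
  exists k : 'I_r -> M, (exists l, k l != 0) /\ \sum_l k l ^+ p * g l = 0.
Proof.
elim: xs => [|x xs IH] M j p pM sj r g nu inu hs [l0 hl0].
  have hm l : {m | nu l = j m} by apply: sig_eqW; apply: inR_nil.
  exists (fun l => sval (hm l)); split.
    exists l0; apply: contraNneq hl0 => h; by rewrite (svalP (hm l0)) h rmorph0.
  apply: (fmorph_inj j); rewrite rmorph0 -[RHS]hs rmorph_sum; apply: eq_bigr => l _.
  by rewrite rmorphM rmorphXn -(svalP (hm l)).
have [q [q0 sq rq]] := sj x.
pose E := subFExtend j x q.
pose jE : {rmorphism E -> L} := subfx_inj.
pose iE := inj_subfx j x q.
have jiE m : jE (iE m) = j m.
  change (subfx_inj (subfx_eval j x q m%:P) = j m).
  by rewrite (subfx_inj_eval rq q0) map_polyC hornerC.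
have ev e : exists c : {poly M}, jE e = (map_poly j c).[x].
  have [c ->] := subfxE e; exists c.
  by change (subfx_inj (subfx_eval j x q c) = (map_poly j c).[x]); rewrite (subfx_inj_eval rq q0).
have pE : p \in [pchar E] by apply: (rmorph_pchar iE).
have sjE : sepalg jE.
  move=> y; have [qy [qy0 sqy ry]] := sj y.
  exists (map_poly iE qy); split.
  - by rewrite map_poly_eq0.
  - by rewrite separable_map.
  - by rewrite -map_poly_comp (eq_map_poly jiE).
have inu' l : inR jE xs (nu l).
  elim: (inu l) => [m|y|y z _ hy _ hz|y z _ hy _ hz].
  - by rewrite -jiE; apply: inR_base.
  - rewrite inE => /orP[/eqP->|yin]; last by apply: inR_gen.
    have h := inR_base jE xs (subfx_root j x q).
    by change (inR jE xs (subfx_inj (subfx_root j x q))) in h; rewrite (subfx_inj_root rq q0) in h.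
  - by apply: inR_add.
  - by apply: inR_mul.
have [k' [[l1 hl1] hk']] : exists k : 'I_r -> E, (exists l, k l != 0) /\
    \sum_l k l ^+ p * iE (g l) = 0.
  apply: (IH E jE p pE sjE r (fun l => iE (g l)) nu inu') => //.
  - by rewrite -[RHS]hs; apply: eq_bigr => l _; rewrite jiE.
  - by exists l0.
have hc l : {c : {poly M} | jE (k' l) = (map_poly j c).[x]}.
  by apply: sig_eqW; apply: ev.
apply: (OS pM q0 sq rq (c := fun l => sval (hc l)) (g := g)).
  transitivity (jE (\sum_l k' l ^+ p * iE (g l))); last by rewrite hk' rmorph0.
  rewrite rmorph_sum; apply: eq_bigr => l _.
  by rewrite rmorphM rmorphXn jiE -(svalP (hc l)).
by exists l1; rewrite -(svalP (hc l1)) fmorph_eq0.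
Qed.
End Tower.

Section PLin.
Variables (K : fieldType) (p : nat).
Hypothesis pK : p \in [pchar K].

Lemma frobD (a b : K) : (a + b) ^+ p = a ^+ p + b ^+ p.
Proof. by rewrite -!(pFrobenius_autE pK) rmorphD. Qed.
Lemma frobN (a : K) : (- a) ^+ p = - a ^+ p.
Proof. by rewrite -!(pFrobenius_autE pK) rmorphN. Qed.
Lemma frobB (a b : K) : (a - b) ^+ p = a ^+ p - b ^+ p.
Proof. by rewrite frobD frobN. Qed.
Lemma frobV (a : K) : (a ^-1) ^+ p = (a ^+ p) ^-1.
Proof. by rewrite exprVn. Qed.
Lemma frob_sum I (r : seq I) (P : pred I) (f : I -> K) :
  (\sum_(i <- r | P i) f i) ^+ p = \sum_(i <- r | P i) f i ^+ p.
Proof. by rewrite -(pFrobenius_autE pK) rmorph_sum; apply: eq_bigr => i _. Qed.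
Lemma frob_inj : injective (fun a : K => a ^+ p).
Proof.
move=> a b /eqP; rewrite -subr_eq0 -frobB expf_eq0 subr_eq0 => /andP[_ /eqP] //.
Qed.

Definition indepK r (w : 'I_r -> K) :=
  forall k : 'I_r -> K, \sum_l k l ^+ p * w l = 0 -> forall l, k l = 0.

Lemma indepK_uniq r (w : 'I_r -> K) : indepK w -> forall a b : 'I_r -> K,
  \sum_l a l ^+ p * w l = \sum_l b l ^+ p * w l -> forall l, a l = b l.
Proof.
move=> iw a b e l; apply/eqP; rewrite -subr_eq0; apply/eqP.
apply: (iw (fun l => a l - b l)) => //.
rewrite (eq_bigr (fun l => a l ^+ p * w l - b l ^+ p * w l)); last first.
  by move=> i _; rewrite frobB mulrBl.
by rewrite sumrB e subrr.
Qed.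

Definition wext r (w : 'I_r -> K) (y : K) (l : 'I_r.+1) : K :=
  if unlift ord_max l is Some l' then w l' else y.

Lemma widen_lift r (l : 'I_r) : widen_ord (leqnSn r) l = lift ord_max l.
Proof. by apply: val_inj; rewrite /= /bump leqNgt ltn_ord. Qed.

Lemma unlift_widen r (l : 'I_r) : unlift ord_max (widen_ord (leqnSn r) l) = Some l.
Proof. by rewrite widen_lift liftK. Qed.

Lemma sum_ext r (f : 'I_r.+1 -> K) :
  \sum_l f l = \sum_(l < r) f (widen_ord (leqnSn r) l) + f ord_max.
Proof. by rewrite big_ord_recr. Qed.

Lemma BasisFact (s : seq K) : exists r (w : 'I_r -> K), indepK w /\
  forall y, y \in s -> exists k : 'I_r -> K, y = \sum_l k l ^+ p * w l.
Proof.
elim: s => [|y s [r [w [iw sp]]]].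
  by exists 0%N, (fun _ => 0); split=> // k _ [].
case: (classic (exists k : 'I_r -> K, y = \sum_l k l ^+ p * w l)) => [yin|yout].
  exists r, w; split=> // z; rewrite inE => /orP[/eqP->//|]; exact: sp.
have pp := pcharf_prime pK.
have p0 : (0 < p)%N by apply: prime_gt0.
exists r.+1, (wext w y); split.
  move=> k; rewrite sum_ext /wext unlift_none.
  under eq_bigr => l _ do rewrite unlift_widen.
  move=> e.
  have kmax : k ord_max = 0.
    case: (eqVneq (k ord_max) 0) => // kn; exfalso; apply: yout.
    exists (fun l => - (k (widen_ord (leqnSn r) l) / k ord_max)).
    under eq_bigr => l _ do rewrite frobN exprMn frobV mulNr -mulrA mulrCA.
    rewrite sumrN -mulr_sumr; move/eqP: e; rewrite addr_eq0 => /eqP->.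
    by rewrite mulrN opprK mulrA mulVf ?mul1r // expf_neq0.
  rewrite kmax expr0n (gtn_eqF p0) mul0r addr0 in e.
  move=> l; case: (unliftP ord_max l) => [l'|] ->; last by [].
  by rewrite -widen_lift; apply: (iw (fun l => k (widen_ord (leqnSn r) l)) e).
move=> z; rewrite inE => /orP[/eqP->|zin].
  exists (fun l => if l == ord_max then 1 else 0).
  rewrite sum_ext eqxx expr1n mul1r /wext unlift_none big1 ?add0r //.
  move=> l _.
  by rewrite widen_lift eq_sym (negbTE (neq_lift _ _)) expr0n (gtn_eqF p0) mul0r.
have [k ->] := sp z zin.
exists (fun l => if unlift ord_max l is Some l' then k l' else 0).
rewrite sum_ext unlift_none expr0n (gtn_eqF p0) mul0r addr0.
by apply: eq_bigr => l _; rewrite /wext unlift_widen.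
Qed.
End PLin.

Lemma rV_expand (K : fieldType) r (v : 'rV[K]_r) : rVpoly v = \sum_(l < r) v 0 l *: 'X^l.
Proof.
rewrite -[v in LHS]mulmx1 mulmx_sum_row linear_sum; apply: eq_bigr => l _.
by rewrite linearZ /= row1 rVpoly_delta.
Qed.

Lemma SepFact (F L : fieldType) (iota : {rmorphism F -> L}) (p : nat)
  (pF : p \in [pchar F]) (x : L) :
  (exists q : {poly F}, [/\ q != 0, separable_poly q & root (map_poly iota q) x]) ->
  exists G : {poly F}, x = (map_poly iota G).[x ^+ p].
Proof.
move=> [q [q0 sq vq]].
have [P [P0 vP Pmin]] := minpoly_ex q0 vq.
have sP : separable_poly P by apply: (dvdp_separable _ sq); exact: (minpoly_dvd P0 vP Pmin vq).
pose r := (size P).-1.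
have szmod (G : {poly F}) : (size (G %% P)%R <= r)%N.
  by rewrite -ltnS /r prednK ?size_poly_gt0 // ltn_modpN0.
pose C : 'M[F]_r := \matrix_(l < r) poly_rV ('X^(p * l) %% P).
have rvC v : rVpoly (v *m C) = \sum_(l < r) v 0 l *: ('X^(p * l) %% P).
  rewrite mulmx_sum_row linear_sum; apply: eq_bigr => l _.
  by rewrite linearZ /= rowK poly_rV_K.
have evC v : (map_poly iota (rVpoly (v *m C))).[x] = (map_poly iota (rVpoly v)).[x ^+ p].
  rewrite rvC rV_expand !rmorph_sum !horner_sum; apply: eq_bigr => l _ /=.
  rewrite !map_polyZ !hornerZ -(eval_mod _ vP) map_polyXn !hornerXn.
  by rewrite map_polyXn hornerXn exprM.
have Cu : C \in unitmx.
  rewrite -row_free_unit; apply: inj_row_free => v vC.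
  have : rVpoly v = 0.
    case: (eqVneq (rVpoly v) 0) => // nz; exfalso.
    apply: (Core pF P0 vP Pmin sP nz).
      by rewrite (leq_ltn_trans (size_poly _ _)) // /r prednK // size_poly_gt0.
    by rewrite /root -evC vC linear0 rmorph0 horner0.
  by move/(congr1 (@poly_rV _ r)); rewrite rVpolyK linear0.
exists (rVpoly (poly_rV ('X %% P) *m invmx C)).
rewrite -evC mulmxKV // poly_rV_K // -(eval_mod _ vP).
by rewrite map_polyX hornerX.
Qed.

Section Swap.
Variables (K : fieldType) (p : nat).
Hypothesis pK : p \in [pchar K].

Lemma psum_swap m r (a : 'I_m -> K) (B : 'I_m -> 'I_r -> K) (w : 'I_r -> K) :
  \sum_i a i ^+ p * (\sum_l B i l ^+ p * w l) =
  \sum_l (\sum_i a i * B i l) ^+ p * w l.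
Proof.
under eq_bigr => i _ do rewrite mulr_sumr.
rewrite exchange_big /=; apply: eq_bigr => l _.
rewrite (frob_sum pK) mulr_suml; apply: eq_bigr => i _.
by rewrite exprMn mulrA.
Qed.

Lemma pcomp m n r (A : 'M[K]_(m, n)) (B : 'M[K]_(n, r)) (v : 'I_n -> K) (w : 'I_r -> K) :
  (forall j, v j = \sum_k B j k ^+ p * w k) ->
  forall i, \sum_j A i j ^+ p * v j = \sum_k (A *m B) i k ^+ p * w k.
Proof.
move=> hv i; under eq_bigr => j _ do rewrite hv.
rewrite psum_swap; apply: eq_bigr => k _; by rewrite mxE.
Qed.

Lemma pid n (f : 'I_n -> K) j : \sum_k (1%:M : 'M[K]_n) j k ^+ p * f k = f j.
Proof.
rewrite (bigD1 j) //= big1 => [|k kj]; first by rewrite mxE eqxx expr1n mul1r addr0.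
by rewrite mxE eq_sym (negbTE kj) expr0n (gtn_eqF (prime_gt0 (pcharf_prime pK))) mul0r.
Qed.

Lemma iso_char n (a b : 'I_n -> K) :
  pform_isometric p a b <->
  exists2 T : 'M[K]_n, T \in unitmx & forall i, a i = \sum_j T i j ^+ p * b j.
Proof.
split.
  move=> [T [Tu hT]]; exists T => // i.
  have h := hT (delta_mx 0 i); rewrite /pform_eval -rowE in h.
  have e : \sum_(k < n) a k * (delta_mx 0 i : 'rV[K]_n) 0 k ^+ p = a i.
    rewrite (bigD1 i) //= big1 => [|k ki]; last first.
      by rewrite mxE (negbTE ki) andbF expr0n (gtn_eqF (prime_gt0 (pcharf_prime pK))) mulr0.
    by rewrite mxE !eqxx expr1n mulr1 addr0.
  rewrite e in h; rewrite -h.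
  by apply: eq_bigr => j _; rewrite mxE mulrC.
move=> [T Tu hT]; exists T; split=> // x.
rewrite /pform_eval.
under eq_bigr => j _ do rewrite mxE (frob_sum pK).
under [RHS]eq_bigr => i _ do rewrite hT.
under eq_bigr => j _ do rewrite mulr_sumr.
rewrite exchange_big /=; apply: eq_bigr => i _.
rewrite mulr_suml; apply: eq_bigr => j _.
by rewrite exprMn; ring.
Qed.

Lemma sim_char n (a b : 'I_n -> K) :
  pform_similar p a b <->
  exists c, c != 0 /\ exists2 T : 'M[K]_n, T \in unitmx &
     forall i, a i = \sum_j T i j ^+ p * (c * b j).
Proof.
split; move=> [c [c0 h]]; exists c; split => //.
  by move/iso_char: h.
by apply/iso_char.
Qed.
End Swap.

Section Desc.
Variables (F L : fieldType) (iota : {rmorphism F -> L}) (p : nat).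
Hypothesis pF : p \in [pchar F].
Hypothesis sep : separable_algebraic_ext iota.
Let pL : p \in [pchar L] := rmorph_pchar iota pF.

Lemma LD r (w : 'I_r -> F) : indepK p w -> forall mu : 'I_r -> L,
  \sum_l mu l ^+ p * iota (w l) = 0 -> forall l, mu l = 0.
Proof.
move=> iw mu hs l; apply: NNPP => /eqP nz.
have inu l' : inR iota [seq mu l | l <- enum 'I_r] (mu l').
  by apply: inR_gen; apply: map_f; rewrite mem_enum.
have [k [[l1 hl1] hk]] := LDgen pF sep inu hs (ex_intro _ l nz).
by move: hl1; rewrite (iw k hk l1) eqxx.
Qed.

Lemma LDuniq r (w : 'I_r -> F) : indepK p w -> forall a b : 'I_r -> L,
  \sum_l a l ^+ p * iota (w l) = \sum_l b l ^+ p * iota (w l) -> forall l, a l = b l.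
Proof.
move=> iw a b e l; apply/eqP; rewrite -subr_eq0; apply/eqP.
refine (LD iw (mu := fun l => a l - b l) _ l).
rewrite (eq_bigr (fun l => a l ^+ p * iota (w l) - b l ^+ p * iota (w l))); last first.
  by move=> i _; rewrite (frobB pL) mulrBl.
by rewrite sumrB e subrr.
Qed.

End Desc.

Lemma map_bigcap_sub (F L : fieldType) (f : {rmorphism F -> L}) n m k
  (X : 'M[L]_(m, k)) (Kf : 'I_n -> 'M[F]_k) :
  (forall j, X <= map_mx f (Kf j))%MS -> (X <= map_mx f (\bigcap_(j < n) Kf j))%MS.
Proof.
move=> h; apply: (big_rec (fun M => X <= map_mx f M)%MS).
  by rewrite map_mx1 submx1.
by move=> j M _ hM; rewrite map_capmx sub_capmx h hM.
Qed.

Lemma iota_comb (F L : fieldType) (iota : {rmorphism F -> L}) p r (k w : 'I_r -> F) :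
  \sum_l iota (k l) ^+ p * iota (w l) = iota (\sum_l k l ^+ p * w l).
Proof. by rewrite rmorph_sum; apply: eq_bigr => l _; rewrite rmorphM rmorphXn. Qed.

Section Desc2.
Variables (F L : fieldType) (iota : {rmorphism F -> L}) (p : nat).
Hypothesis pF : p \in [pchar F].
Hypothesis sep : separable_algebraic_ext iota.
Let pL : p \in [pchar L] := rmorph_pchar iota pF.

Lemma Desc n (u w : 'I_n -> F) (x : L) (R : 'M[L]_n) : x != 0 ->
  (forall j, x * iota (u j) = \sum_i R j i ^+ p * iota (w i)) ->
  exists c, c != 0 /\ exists R' : 'M[F]_n,
    forall j, c * u j = \sum_i R' j i ^+ p * w i.
Proof.
move=> x0 hx.
have [G eG] := SepFact pF (sep x).
pose T := size G.
have ex : x = \sum_(t < T) iota (G`_t) * (x ^+ t) ^+ p.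
  rewrite {1}eG horner_coef size_map_poly; apply: eq_bigr => t _.
  by rewrite coef_map exprAC.
pose s := map (fun tj : 'I_T * 'I_n => G`_(tj.1) * u tj.2) (enum {: 'I_T * 'I_n}) ++
          [seq w i | i <- enum 'I_n].
have [r [om [iom sp]]] := BasisFact pF s.
have hB (t : 'I_T) j : {k : 'I_r -> F | G`_t * u j = \sum_l k l ^+ p * om l}.
  apply: constructive_indefinite_description; apply: sp.
  rewrite mem_cat; apply/orP; left.
  by apply/mapP; exists (t, j); rewrite ?mem_enum.
have hA i : {k : 'I_r -> F | w i = \sum_l k l ^+ p * om l}.
  apply: constructive_indefinite_description; apply: sp.
  by rewrite mem_cat; apply/orP; right; apply: map_f; rewrite mem_enum.
pose Bc t j := sval (hB t j).
pose Ac i := sval (hA i).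
have key j l : \sum_(t < T) x ^+ t * iota (Bc t j l) = \sum_i R j i * iota (Ac i l).
  refine (LDuniq pF sep iom (a := fun l => \sum_(t < T) x ^+ t * iota (Bc t j l))
                            (b := fun l => \sum_i R j i * iota (Ac i l)) _ l).
  rewrite -!(psum_swap pL).
  under eq_bigr => t _ do rewrite iota_comb -(svalP (hB t j)).
  under [RHS]eq_bigr => i _ do rewrite iota_comb -(svalP (hA i)).
  rewrite -hx {2}ex mulr_suml; apply: eq_bigr => t _.
  by rewrite rmorphM; ring.
pose A : 'M[F]_(n, r) := \matrix_(i, l) Ac i l.
pose Bm j : 'M[F]_(T, r) := \matrix_(t, l) Bc t j l.
pose zL : 'rV[L]_T := \row_t x ^+ t.
have zB j : zL *m map_mx iota (Bm j) = row j R *m map_mx iota A.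
  apply/rowP => l; rewrite !mxE.
  transitivity (\sum_(t < T) x ^+ t * iota (Bc t j l)); first by apply: eq_bigr => t _; rewrite !mxE.
  by rewrite key; apply: eq_bigr => i _; rewrite !mxE.
pose Kj j := kermx (Bm j *m cokermx A).
pose Z := (\bigcap_(j < n) Kj j)%MS.
have zZ : (zL <= map_mx iota Z)%MS.
  apply: map_bigcap_sub => j.
  rewrite /Kj map_kermx map_mxM map_cokermx; apply/sub_kermxP.
  by rewrite mulmxA; apply/eqP; rewrite -submxE zB submxMl.
have [W eW] := submxP zZ.
have zt (t : 'I_T) : x ^+ t = \sum_k W 0 k * iota (Z k t).
  by have := congr1 (fun M : 'M[L]_(1, T) => M 0 t) eW; rewrite /= !mxE => ->; apply: eq_bigr => k _; rewrite mxE.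
have [k ck] : exists k, \sum_(t < T) G`_t * Z k t ^+ p != 0.
  apply: NNPP => nex; move: x0; rewrite ex.
  under eq_bigr => t _ do rewrite zt (frob_sum pL) mulr_sumr.
  rewrite exchange_big /= big1 ?eqxx // => k _.
  transitivity (W 0 k ^+ p * iota (\sum_(t < T) G`_t * Z k t ^+ p)).
    rewrite rmorph_sum mulr_sumr; apply: eq_bigr => t _.
    by rewrite exprMn rmorphM rmorphXn; ring.
  have -> : \sum_(t < T) G`_t * Z k t ^+ p = 0.
    by apply/eqP; apply: NNPP => h; apply: nex; exists k; apply/negP.
  by rewrite rmorph0 mulr0.
pose z := row k Z.
have zK j : (z *m Bm j <= A)%MS.
  have : (z <= Kj j)%MS.
    by apply: submx_trans (row_sub k Z) _; apply: bigcapmx_inf.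
  by move/sub_kermxP; rewrite mulmxA => /eqP; rewrite -submxE.
have hY j : {Y : 'rV[F]_n | z *m Bm j = Y *m A}.
  by apply: constructive_indefinite_description; apply/submxP.
exists (\sum_(t < T) G`_t * Z k t ^+ p); split => //.
exists (\matrix_(j, i) (sval (hY j)) 0 i) => j.
transitivity (\sum_l ((z *m Bm j) 0 l) ^+ p * om l).
  rewrite mulr_suml.
  under eq_bigr => t _ do rewrite -mulrA mulrCA (svalP (hB t j)).
  rewrite (psum_swap pF); apply: eq_bigr => l _; congr (_ ^+ _ * _).
  by rewrite !mxE; apply: eq_bigr => t _; rewrite !mxE.
rewrite (svalP (hY j)).
under [RHS]eq_bigr => i _ do rewrite (svalP (hA i)).
rewrite (psum_swap pF); apply: eq_bigr => l _; congr (_ ^+ _ * _).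
by rewrite !mxE; apply: eq_bigr => i _; rewrite !mxE.
Qed.
End Desc2.

Section KeyF.
Variables (K : fieldType) (p : nat).
Hypothesis pK : p \in [pchar K].

Lemma KeyF n (a b : 'I_n -> K) (c c' : K) (R R' : 'M[K]_n) : c != 0 -> c' != 0 ->
  (forall j, c * b j = \sum_i R j i ^+ p * a i) ->
  (forall i, c' * a i = \sum_j R' i j ^+ p * b j) ->
  exists2 T : 'M[K]_n, T \in unitmx & forall j, c * b j = \sum_i T j i ^+ p * a i.
Proof.
move=> c0 c'0 hR hR'.
pose s := [seq a i | i <- enum 'I_n] ++ [seq c * b j | j <- enum 'I_n] ++
          [seq c * c' * a i | i <- enum 'I_n].
have [r [om [iom sp]]] := BasisFact pK s.
have hA i : {k : 'I_r -> K | a i = \sum_l k l ^+ p * om l}.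
  apply: constructive_indefinite_description; apply: sp.
  by rewrite !mem_cat; apply/orP; left; apply: map_f; rewrite mem_enum.
have hU j : {k : 'I_r -> K | c * b j = \sum_l k l ^+ p * om l}.
  apply: constructive_indefinite_description; apply: sp.
  rewrite !mem_cat; apply/orP; right; apply/orP; left.
  by apply: map_f; rewrite mem_enum.
have hV i : {k : 'I_r -> K | c * c' * a i = \sum_l k l ^+ p * om l}.
  apply: constructive_indefinite_description; apply: sp.
  rewrite !mem_cat; apply/orP; right; apply/orP; right.
  by apply: map_f; rewrite mem_enum.
pose W : 'M[K]_(n, r) := \matrix_(i, l) sval (hA i) l.
pose U : 'M[K]_(n, r) := \matrix_(i, l) sval (hU i) l.
pose V : 'M[K]_(n, r) := \matrix_(i, l) sval (hV i) l.
have rW i : a i = \sum_l W i l ^+ p * om l.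
  by rewrite (svalP (hA i)); apply: eq_bigr => l _; rewrite mxE.
have rU j : c * b j = \sum_l U j l ^+ p * om l.
  by rewrite (svalP (hU j)); apply: eq_bigr => l _; rewrite mxE.
have rV i : c * c' * a i = \sum_l V i l ^+ p * om l.
  by rewrite (svalP (hV i)); apply: eq_bigr => l _; rewrite mxE.
have eU : U = R *m W.
  apply/matrixP => j l.
  refine (indepK_uniq pK iom (a := fun l => U j l) (b := fun l => (R *m W) j l) _ l).
  by rewrite -rU hR (pcomp pK R rW).
have eV : V = R' *m U.
  apply/matrixP => i l.
  refine (indepK_uniq pK iom (a := fun l => V i l) (b := fun l => (R' *m U) i l) _ l).
  rewrite -rV -mulrA hR' mulr_sumr -(pcomp pK R' rU); apply: eq_bigr => j _.
  by rewrite mulrCA.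
have sW (v : 'rV[K]_n) : \sum_l ((v *m W) 0 l) ^+ p * om l = \sum_i v 0 i ^+ p * a i.
  by rewrite (pcomp pK v rW).
have sV (v : 'rV[K]_n) :
    \sum_l ((v *m V) 0 l) ^+ p * om l = c * c' * \sum_i v 0 i ^+ p * a i.
  rewrite -(pcomp pK v rV) mulr_sumr; apply: eq_bigr => i _; ring.
have p0 : (0 < p)%N by apply: prime_gt0; apply: pcharf_prime pK.
have z0 (v : 'rV[K]_n) : \sum_l ((v *m 0 : 'M[K]_(1, r)) 0 l) ^+ p * om l = 0.
  by rewrite big1 // => l _; rewrite mulmx0 mxE expr0n (gtn_eqF p0) mul0r.
have kerWV (v : 'rV[K]_n) : (v *m W == 0) = (v *m V == 0).
  apply/eqP/eqP => h.
    apply/rowP => l; rewrite [RHS]mxE.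
    refine (iom (fun l => (v *m V) 0 l) _ l).
    by rewrite sV -sW h big1 ?mulr0 // => l' _; rewrite mxE expr0n (gtn_eqF p0) mul0r.
  apply/rowP => l; rewrite [RHS]mxE.
  refine (iom (fun l => (v *m W) 0 l) _ l).
  have : c * c' * \sum_i v 0 i ^+ p * a i = 0.
    rewrite -sV h; rewrite big1 // => l' _; rewrite mxE expr0n (gtn_eqF p0) mul0r //.
  by move/eqP; rewrite mulf_eq0 mulf_eq0 (negbTE c0) (negbTE c'0) /= sW => /eqP.
have kk : (kermx W == kermx V)%MS.
  apply/andP; split; apply/sub_kermxP/row_matrixP => i; rewrite row_mul row0;
    apply/eqP; [rewrite -kerWV | rewrite kerWV];
    by rewrite -row_mul mulmx_ker row0.
have rk : \rank W = \rank V.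
  have := eqmx_rank kk; rewrite !mxrank_ker.
  have := rank_leq_row W; have := rank_leq_row V.
  move: (\rank W) (\rank V) => x y; lia.
have rk1 : (\rank V <= \rank U)%N by rewrite eV mxrankM_maxr.
have rk2 : (\rank U <= \rank W)%N by rewrite eU mxrankM_maxr.
have sUW : (U <= W)%MS by rewrite eU submxMl.
have eUW : (U == W)%MS.
  have [_ <-] := mxrank_leqif_eq sUW.
  by rewrite eqn_leq rk2 rk rk1.
have [T Tu eT] := eqmxMunitP _ _ eUW.
exists T => // j.
by rewrite rU (pcomp pK T rW) eT.
Qed.
End KeyF.

Theorem corollary5p3 (F L : fieldType) (p : nat) (iota : {rmorphism F -> L})
  (n : nat) (a b : 'I_n -> F) :
  (p \in [pchar F])%R -> separable_algebraic_ext iota ->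
  (pform_similar p a b <->
   pform_similar p (pform_ext iota a) (pform_ext iota b)).
Proof.
move=> pF sep.
have pL : p \in [pchar L] := rmorph_pchar iota pF.
rewrite (sim_char pF) (sim_char pL) /pform_ext.
split.
  move=> [c [c0 [T Tu hT]]].
  exists (iota c); split; first by rewrite fmorph_eq0.
  exists (map_mx iota T); first by rewrite map_unitmx.
  move=> i; rewrite hT rmorph_sum; apply: eq_bigr => j _.
  by rewrite !rmorphM rmorphXn mxE.
move=> [d [d0 [S Su hS]]].
have R1 i : d^-1 * iota (a i) = \sum_j S i j ^+ p * iota (b j).
  rewrite hS mulr_sumr; apply: eq_bigr => j _.
  by rewrite mulrCA mulKf.
have R2 j : d * iota (b j) = \sum_i (invmx S) j i ^+ p * iota (a i).
  rewrite (pcomp pL (invmx S) hS) mulVmx //.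
  by rewrite (pid pL (fun k => d * iota (b k))).
have [c' [c'0 [R' hR']]] := Desc pF sep (invr_neq0 d0) R1.
have [c [c0 [R hR]]] := Desc pF sep d0 R2.
have [T Tu hT] := KeyF pF c0 c'0 hR hR'.
exists c; split => //; exists (invmx T); first by rewrite unitmx_inv.
move=> i; rewrite (pcomp pF (invmx T) hT) mulVmx //.
by rewrite (pid pF a).
Qed.
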